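(* Let $A\in\mathbb{R}^{D\times k}$ be a nonnegative matrix of full column rank and let $\delta\ge0$. Then $$\lambda_\delta(A)=\max\{\|x\|_\infty-\delta\|x\|_1 \;:\; x\in\mathbb{R}^k,\ \|Ax\|_1\le 1\}.$$ Equivalently, $\lambda_\delta(A)$ equals the optimal value of the program: maximize $\mathrm{tr}(Q)-\delta\sum_{i,j}|Q_{ij}|$ over $Q\in\mathbb{R}^{k\times k}$ subject to $\sum_{i,j}|(QA^\top)_{ij}|\le 1$.
   Context: For a matrix $M$, $\|M\|_{\max}=\max_{i,j}|M_{ij}|$. For $\delta\ge 0$, $\lambda_\delta(A)$ denotes the optimal value of the convex program: minimize $\|B\|_{\max}$ over $B\in\mathbb{R}^{k\times D}$ subject to $\|BA-I_k\|_{\max}\le\delta$. *)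

(* Defs.v *)
From HB Require Import structures.
From mathcomp Require Import all_boot all_order all_algebra.
Set Implicit Arguments. Unset Strict Implicit. Unset Printing Implicit Defensive.
Import Order.TTheory GRing.Theory Num.Theory.
Local Open Scope ring_scope.

Definition mxmaxnorm (R : realFieldType) (m n : nat) (M : 'M[R]_(m, n)) : R :=
  \big[Num.max/0]_(i < m) \big[Num.max/0]_(j < n) `|M i j|.

Definition mxl1 (R : realFieldType) (m n : nat) (M : 'M[R]_(m, n)) : R :=
  \sum_(i < m) \sum_(j < n) `|M i j|.

Definition vinf (R : realFieldType) (n : nat) (x : 'cV[R]_n) : R :=
  \big[Num.max/0]_(i < n) `|x i 0|.
Definition vl1 (R : realFieldType) (n : nat) (x : 'cV[R]_n) : R :=
  \sum_(i < n) `|x i 0|.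

(* Objective values of the program defining lambda_delta(A):
   minimize ||B||_max over B in R^{k x D} s.t. ||BA - I_k||_max <= delta *)
Definition lambda_values (R : realFieldType) (D k : nat) (delta : R)
    (A : 'M[R]_(D, k)) (y : R) : Prop :=
  exists B : 'M[R]_(k, D), mxmaxnorm (B *m A - 1%:M) <= delta /\ y = mxmaxnorm B.

Definition dual_values (R : realFieldType) (D k : nat) (delta : R)
    (A : 'M[R]_(D, k)) (y : R) : Prop :=
  exists x : 'cV[R]_k, vl1 (A *m x) <= 1 /\ y = vinf x - delta * vl1 x.

Definition trace_values (R : realFieldType) (D k : nat) (delta : R)
    (A : 'M[R]_(D, k)) (y : R) : Prop :=
  exists Q : 'M[R]_k, mxl1 (Q *m A^T) <= 1 /\ y = \tr Q - delta * mxl1 Q.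

Definition is_inf (R : realFieldType) (S : R -> Prop) (v : R) : Prop :=
  (forall y, S y -> v <= y) /\ (forall w, (forall y, S y -> w <= y) -> w <= v).
Definition is_sup (R : realFieldType) (S : R -> Prop) (v : R) : Prop :=
  (forall y, S y -> y <= v) /\ (forall w, (forall y, S y -> y <= w) -> v <= w).
Definition is_max (R : realFieldType) (S : R -> Prop) (v : R) : Prop :=
  S v /\ (forall y, S y -> y <= v).

(* Main.v *)
Require Import Defs.
From HB Require Import structures.
From mathcomp Require Import all_boot all_order all_algebra.
From mathcomp Require Import ring lra.
From Stdlib Require Import Classical.
Set Implicit Arguments. Unset Strict Implicit. Unset Printing Implicit Defensive.
Import Order.TTheory GRing.Theory Num.Theory.
Local Open Scope ring_scope.

Section Farkas.
Variable R : realFieldType.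

Lemma sum_if_eq (I : finType) (p : I) (u : R) (f : I -> R) :
  \sum_i (if i == p then u else 0) * f i = u * f p.
Proof.
rewrite (bigD1 p) //= eqxx big1 ?addr0 // => i /negbTE ->; by rewrite mul0r.
Qed.

Lemma choose_between (I : finType) (P N : pred I) (L U : I -> R) :
  (forall p q, P p -> N q -> L q <= U p) ->
  exists t, (forall q, N q -> L q <= t) /\ (forall p, P p -> t <= U p).
Proof.
move=> H.
case: (pickP N) => [q0 Nq0|N0].
  exists (\big[Order.max/L q0]_(q | N q) L q); split.
    by move=> q Nq; apply: le_bigmax_cond.
  move=> p Pp; apply: bigmax_le; first exact: H.
  by move=> q Nq; apply: H.
case: (pickP P) => [p0 Pp0|P0].
  exists (\big[Order.min/U p0]_(p | P p) U p); split.
    by move=> q; rewrite N0.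
  by move=> p Pp; apply: bigmin_le_cond.
by exists 0; split => [q|p]; rewrite ?N0 ?P0.
Qed.

Lemma farkas_ord (n : nat) : forall (I : finType) (a : I -> 'I_n -> R) (c : I -> R),
  (forall x : 'I_n -> R, exists i, c i < \sum_j a i j * x j) ->
  exists y : I -> R, (forall i, 0 <= y i) /\ (forall j, \sum_i y i * a i j = 0)
    /\ \sum_i y i * c i < 0.
Proof.
elim: n => [|n IH] I a c H.
  have [i Hi] := H (fun _ => 0).
  rewrite big_ord0 in Hi.
  exists (fun i' => if i' == i then 1 else 0); split; first by move=> i'; case: ifP.
  split; first by case.
  by rewrite sum_if_eq mul1r.
pose al i := a i ord0.
pose m (i' : (I + I * I)%type) (i : I) : R :=
  match i' with
  | inl z => if (al z == 0) && (i == z) then 1 else 0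
  | inr (p, q) => if (0 < al p) && (al q < 0) then
       (if i == p then - al q else 0) + (if i == q then al p else 0) else 0
  end.
have m_ge0 i' i : 0 <= m i' i.
  case: i' => [z|[p q]] /=; first by case: ifP.
  case: ifP => // /andP[hp hq]; apply: addr_ge0; case: ifP => //.
    by rewrite oppr_ge0 ltW.
  by rewrite ltW.
have m_al i' : \sum_i m i' i * al i = 0.
  case: i' => [z|[p q]] /=.
    apply: big1 => i _; case: ifP => [/andP[/eqP h /eqP ->]|]; by rewrite ?h ?mulr0 ?mul0r.
  case E: ((0 < al p) && (al q < 0)); last by apply: big1 => *; rewrite mul0r.
  case/andP: E => hp hq.
  rewrite (eq_bigr (fun i => (if i == p then - al q else 0) * al i +
                           (if i == q then al p else 0) * al i)); last by move=> *; rewrite mulrDl.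
  by rewrite big_split /= !sum_if_eq mulNr mulrC addNr.
pose a2 i' (j : 'I_n) := \sum_i m i' i * a i (lift ord0 j).
pose c2 i' := \sum_i m i' i * c i.
have Hyp : forall x : 'I_n -> R, exists i', c2 i' < \sum_j a2 i' j * x j.
  move=> x.
  have [/existsP [i' Hi'] | /existsPn Hall2] :=
    boolP [exists i', c2 i' < \sum_j a2 i' j * x j]; first by exists i'.
  exfalso.
  pose S i := \sum_j a i (lift ord0 j) * x j.
  have HS i' : \sum_j a2 i' j * x j = \sum_i m i' i * S i.
    rewrite /a2 /S.
    under eq_bigr do rewrite mulr_suml.
    rewrite exchange_big /=; apply: eq_bigr => i _.
    by rewrite mulr_sumr; apply: eq_bigr => j _; rewrite mulrA.
  have Hc i' : \sum_i m i' i * S i <= c2 i'.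
    by rewrite -HS leNgt; apply: Hall2.
  have Hb : forall p q, 0 < al p -> al q < 0 -> (c q - S q) / al q <= (c p - S p) / al p.
    move=> p q hp hq.
    have := Hc (inr (p, q)); rewrite /c2 /m hp hq /=.
    under eq_bigr do rewrite mulrDl.
    under [X in _ <= X]eq_bigr do rewrite mulrDl.
    rewrite !big_split /= !sum_if_eq => hyp.
    set X := (c p - S p) / al p; set Y := (c q - S q) / al q.
    have eX : c p - S p = X * al p by rewrite /X divfK // gt_eqF.
    have eY : c q - S q = Y * al q by rewrite /Y divfK // lt_eqF.
    have h0 : 0 <= - al q * (c p - S p) + al p * (c q - S q) by lra.
    rewrite eX eY (_ : _ + _ = (al p * - al q) * (X - Y)) in h0; last by ring.
    by rewrite pmulr_rge0 ?subr_ge0 // in h0; rewrite mulr_gt0 // oppr_gt0.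
  have [t [Ht1 Ht2]] := choose_between (P := fun p => 0 < al p) (N := fun q => al q < 0)
     (L := fun q => (c q - S q) / al q) (U := fun p => (c p - S p) / al p) Hb.
  pose xx (j : 'I_n.+1) := if unlift ord0 j is Some j' then x j' else t.
  have [i Hi] := H xx.
  rewrite big_ord_recl /xx unlift_none in Hi.
  rewrite (eq_bigr (fun j => a i (lift ord0 j) * x j)) in Hi; last by move=> j _; rewrite liftK.
  rewrite -/(S i) -/(al i) in Hi.
  move: Hi; apply/negP; rewrite -leNgt.
  have [hz|hpos|hp] := ltgtP (al i) 0.
  - have := Ht1 i hz; rewrite /= -(ler_nM2l hz) [al i * (_ / _)]mulrC divfK ?lt_eqF //.
    by move=> h; lra.
  - have := Ht2 i hpos; rewrite /= -(ler_pM2l hpos) [al i * (_ / _)]mulrC divfK ?gt_eqF //.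
    by move=> h; lra.
  - have := Hc (inl i); rewrite /c2 /m hp eqxx /=.
    by rewrite !sum_if_eq !mul1r mul0r add0r.
have [y [y0 [ya yc]]] := IH _ a2 c2 Hyp.
exists (fun i => \sum_i' y i' * m i' i); split.
  by move=> i; apply: sumr_ge0 => i' _; apply: mulr_ge0.
split; last first.
  rewrite (eq_bigr (fun i => \sum_i' y i' * (m i' i * c i))); last first.
    by move=> i _; rewrite mulr_suml; apply: eq_bigr => i' _; rewrite mulrA.
  by rewrite exchange_big /=; under eq_bigr do rewrite -mulr_sumr.
have key (f : I -> R) : \sum_i (\sum_i' y i' * m i' i) * f i = \sum_i' y i' * \sum_i m i' i * f i.
  rewrite (eq_bigr (fun i => \sum_i' y i' * (m i' i * f i))); last first.
    by move=> i _; rewrite mulr_suml; apply: eq_bigr => i' _; rewrite mulrA.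
  by rewrite exchange_big /=; under eq_bigr do rewrite -mulr_sumr.
move=> j; rewrite key.
case: (unliftP ord0 j) => [j'|] ->.
  exact: ya.
by apply: big1 => i' _; rewrite m_al mulr0.
Qed.
Lemma farkas (I J : finType) (a : I -> J -> R) (c : I -> R) :
  (forall x : J -> R, exists i, c i < \sum_j a i j * x j) ->
  exists y : I -> R, (forall i, 0 <= y i) /\ (forall j, \sum_i y i * a i j = 0)
    /\ \sum_i y i * c i < 0.
Proof.
move=> H.
have reid (F : J -> R) : \sum_j F j = \sum_(k < #|J|) F (enum_val k).
  by rewrite (reindex (@enum_val J J)) //; apply: onW_bij; apply: enum_val_bij.
have Hyp : forall x : 'I_#|J| -> R, exists i, c i < \sum_k a i (enum_val k) * x k.
  move=> x; have [i Hi] := H (fun j => x (enum_rank j)).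
  exists i; rewrite reid in Hi.
  by rewrite (eq_bigr (fun k => a i (enum_val k) * x k)) in Hi; last by move=> k _; rewrite enum_valK.
have [y [y0 [ya yc]]] := @farkas_ord #|J| I (fun i k => a i (enum_val k)) c Hyp.
exists y; split => //; split => // j.
by have := ya (enum_rank j); rewrite enum_rankK.
Qed.
End Farkas.

Section Main.
Variables (R : realFieldType) (D k : nat) (A : 'M[R]_(D, k)) (delta : R).
Hypothesis hrank : \rank A = k.
Hypothesis hdelta : 0 <= delta.

Definition sg (b : bool) : R := if b then 1 else -1.

Lemma sg_abs (v : R) : sg (0 <= v) * v = `|v|.
Proof. rewrite /sg; case: (lerP 0 v) => h; first by rewrite mul1r ger0_norm.
by rewrite mulN1r ltr0_norm. Qed.

Lemma sg_norm b : `|sg b| = 1.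
Proof. by case: b; rewrite /sg ?normrN normr1. Qed.

Lemma sum_pair (T1 T2 : finType) (F : T1 * T2 -> R) :
  \sum_p F p = \sum_a \sum_b F (a, b).
Proof. by rewrite pair_big; apply: eq_bigr; case. Qed.

Lemma sum0 (T : finType) (F : T -> R) : \sum_j 0 * F j = 0.
Proof. by apply: big1 => *; rewrite mul0r. Qed.

Lemma summul0 (T : finType) (F : T -> R) : \sum_j F j * 0 = 0.
Proof. by apply: big1 => *; rewrite mulr0. Qed.

Lemma sum_lin (T : finType) (f g : T -> R) (a b : R) :
  \sum_t f t * (a + b * g t) = a * \sum_t f t + b * \sum_t f t * g t.
Proof. by rewrite mulr_sumr mulr_sumr -big_split; apply: eq_bigr => t _ /=; ring. Qed.

Lemma sum_lin2 (T : finType) (f g : T -> R) (a b : R) :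
  \sum_t (a * f t + b * g t) = a * \sum_t f t + b * \sum_t g t.
Proof. by rewrite mulr_sumr mulr_sumr -big_split. Qed.

Lemma sum_nat_eq (f : 'I_k -> R) (i : 'I_k) : \sum_l f l * (l == i)%:R = f i.
Proof.
rewrite (bigD1 i) //= eqxx mulr1 big1 ?addr0 // => l /negbTE ->; by rewrite mulr0.
Qed.

Definition Jt := ('I_D + 'I_k)%type.
Definition It := (('I_k * bool) + ({ffun 'I_D -> bool} + ('I_D * bool * {ffun 'I_k -> bool})))%type.

Definition aa (i : 'I_k) (iota : It) (j : Jt) : R :=
  match iota, j with
  | inl (l, s), inl d => sg s * A d l
  | inl _, inr _ => 0
  | inr (inl _), inl _ => 0
  | inr (inl sig), inr j => \sum_d sg (sig d) * A d j
  | inr (inr (d0, s, _)), inl d => if d == d0 then sg s else 0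
  | inr (inr (_, _, sig)), inr j => - (j == i)%:R + delta * sg (sig j)
  end.

Definition cc (i : 'I_k) (iota : It) : R :=
  match iota with
  | inl (l, s) => delta + sg s * (l == i)%:R
  | inr (inl _) => 1
  | inr (inr _) => 0
  end.

Lemma sumJ (F : Jt -> R) : \sum_j F j = \sum_d F (inl d) + \sum_j F (inr j).
Proof. by rewrite big_sumType. Qed.

Lemma sumI (F : It -> R) : \sum_i F i =
  \sum_l (F (inl (l, true)) + F (inl (l, false))) + \sum_sig F (inr (inl sig)) +
  \sum_d \sum_s \sum_sig F (inr (inr (d, s, sig))).
Proof.
rewrite big_sumType /= big_sumType /= sum_pair addrA; congr (_ + _ + _).
  by apply: eq_bigr => l _; rewrite big_bool.
rewrite sum_pair sum_pair; apply: eq_bigr => d _; rewrite pair_big /=.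
by apply: eq_bigr; case.
Qed.

Lemma row_exists (i : 'I_k) : exists (b : 'I_D -> R) (x : 'cV[R]_k),
  (forall l, `|\sum_d b d * A d l - (l == i)%:R| <= delta) /\
  vl1 (A *m x) <= 1 /\
  (forall d, `|b d| <= x i 0 - delta * vl1 x).
Proof.
case: (classic (exists (b : 'I_D -> R) (x : 'cV[R]_k),
  (forall l, `|\sum_d b d * A d l - (l == i)%:R| <= delta) /\
  vl1 (A *m x) <= 1 /\
  (forall d, `|b d| <= x i 0 - delta * vl1 x))) => // Hno; exfalso.
have Hyp : forall X : Jt -> R, exists iota, cc i iota < \sum_j aa i iota j * X j.
  move=> X.
  have [/existsP [iota Hi] | /existsPn Hall] :=
    boolP [exists iota, cc i iota < \sum_j aa i iota j * X j]; first by exists iota.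
  have {}Hall iota : \sum_j aa i iota j * X j <= cc i iota by rewrite leNgt Hall.
  pose b d := X (inl d); pose x := \col_j X (inr j).
  have xE j : x j 0 = X (inr j) by rewrite mxE.
  exfalso; apply: Hno; exists b, x; split; [|split].
  - move=> l.
    have h s : sg s * (\sum_d b d * A d l) <= delta + sg s * (l == i)%:R.
      have := Hall (inl (l, s)); rewrite sumJ /aa /cc /= sum0 addr0.
      suff -> : sg s * (\sum_d b d * A d l) = \sum_d sg s * A d l * X (inl d) by [].
      rewrite mulr_sumr; apply: eq_bigr => d _.
      by rewrite /b; ring.
    have h1 := h true; have h2 := h false; rewrite /sg in h1 h2.
    rewrite ler_norml; apply/andP; split; lra.
  - pose sig := [ffun d => 0 <= (A *m x) d 0].
    have := Hall (inr (inl sig)); rewrite sumJ /aa /cc /= sum0 add0r.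
    apply: le_trans; rewrite le_eqVlt; apply/orP; left; apply/eqP.
    rewrite /vl1 (eq_bigr (fun d => sg (sig d) * (A *m x) d 0)); last by move=> d _; rewrite ffunE sg_abs.
    under eq_bigr do rewrite mxE mulr_sumr.
    rewrite exchange_big /=; apply: eq_bigr => j _; rewrite mulr_suml; apply: eq_bigr => d _.
    by rewrite xE mulrA.
  - move=> d.
    pose sig := [ffun j => 0 <= x j 0].
    have h s : sg s * b d - x i 0 + delta * vl1 x <= 0.
      have := Hall (inr (inr (d, s, sig))); rewrite sumJ /aa /cc /= sum_if_eq.
      apply: le_trans; rewrite le_eqVlt; apply/orP; left; apply/eqP.
      rewrite -addrA; congr (_ + _).
      under eq_bigr do rewrite mulrDl.
      rewrite big_split /=; congr (_ + _).
        rewrite (eq_bigr (fun j => (if j == i then -1 else 0) * X (inr j))).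
          by rewrite sum_if_eq xE mulN1r.
        by move=> j _; case: eqP; rewrite ?mulr0n ?oppr0.
      rewrite /vl1 mulr_sumr; apply: eq_bigr => j _.
      by rewrite ffunE -sg_abs xE mulrA.
    have h1 := h true; have h2 := h false; rewrite /sg in h1 h2.
    rewrite ler_norml; apply/andP; split; lra.
have [y [y0 [ya yc]]] := farkas Hyp.
pose w l := y (inl (l, true)) - y (inl (l, false)).
pose qa l := y (inl (l, true)) + y (inl (l, false)).
pose mu sig := y (inr (inl sig)).
pose M := \sum_sig mu sig.
pose nu d s sig := y (inr (inr (d, s, sig))).
pose Nd d := \sum_s \sum_sig nu d s sig.
pose N := \sum_d Nd d.
pose pi d := \sum_s \sum_sig nu d s sig * sg s.
pose md d := \sum_sig mu sig * sg (sig d).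
pose rho j := \sum_d \sum_s \sum_sig nu d s sig * sg (sig j).
have mu0 sig : 0 <= mu sig by apply: y0.
have nu0 d s sig : 0 <= nu d s sig by apply: y0.
have M0 : 0 <= M by apply: sumr_ge0.
have Nd0 d : 0 <= Nd d by apply: sumr_ge0 => *; apply: sumr_ge0.
have N0 : 0 <= N by apply: sumr_ge0.
have wq l : `|w l| <= qa l.
  have := y0 (inl (l, true)); have := y0 (inl (l, false)).
  rewrite /w /qa ler_norml => h1 h2; apply/andP; split; lra.
have qa0 l : 0 <= qa l by apply: addr_ge0; apply: y0.
have mdM d : `|md d| <= M.
  apply: le_trans (ler_norm_sum _ _ _) _; apply: ler_sum => sig _.
  by rewrite normrM sg_norm mulr1 ger0_norm.
have piN d : `|pi d| <= Nd d.
  apply: le_trans (ler_norm_sum _ _ _) _; apply: ler_sum => s _.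
  apply: le_trans (ler_norm_sum _ _ _) _; apply: ler_sum => sig _.
  by rewrite normrM sg_norm mulr1 ger0_norm.
have rhoN j : `|rho j| <= N.
  apply: le_trans (ler_norm_sum _ _ _) _; apply: ler_sum => d _.
  apply: le_trans (ler_norm_sum _ _ _) _; apply: ler_sum => s _.
  apply: le_trans (ler_norm_sum _ _ _) _; apply: ler_sum => sig _.
  by rewrite normrM sg_norm mulr1 ger0_norm.
have E1 d : \sum_l w l * A d l + pi d = 0.
  rewrite -[RHS](ya (inl d)) sumI /aa /= -[X in X + pi d]addr0; congr (_ + _ + _).
  - by apply: eq_bigr => l _; rewrite /w; ring.
  - by rewrite summul0.
  rewrite [RHS](bigD1 d) //= [X in _ + X]big1 ?addr0.
    by apply: eq_bigr => s _; apply: eq_bigr => sig _; rewrite eqxx.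
  move=> d0 hd0; apply: big1 => s _; apply: big1 => sig _.
  by rewrite eq_sym (negbTE hd0) mulr0.
have E2 j : \sum_d md d * A d j - N * (j == i)%:R + delta * rho j = 0.
  rewrite -[RHS](ya (inr j)) sumI /aa /= -addrA -[X in X + _]add0r; congr (_ + _ + _).
  - by rewrite big1 // => l _; rewrite !mulr0 addr0.
  - rewrite /md; under eq_bigr do rewrite mulr_suml.
    rewrite exchange_big /=; apply: eq_bigr => sig _; rewrite mulr_sumr.
    by apply: eq_bigr => d _; rewrite mulrA.
  under [RHS]eq_bigr do under eq_bigr do rewrite sum_lin.
  under [RHS]eq_bigr do rewrite sum_lin2.
  by rewrite sum_lin2; congr (_ + _); rewrite mulNr; congr (- _); apply: mulrC.
have E3 : delta * \sum_l qa l + w i + M < 0.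
  suff -> : delta * \sum_l qa l + w i + M = \sum_iota y iota * cc i iota by [].
  rewrite sumI /cc /= [X in _ = _ + X]big1; last first.
    by move=> d _; apply: big1 => s _; apply: big1 => *; rewrite mulr0.
  rewrite addr0; congr (_ + _); last by apply: eq_bigr => sig _; rewrite mulr1.
  rewrite [RHS](eq_bigr (fun l => delta * qa l + w l * (l == i)%:R)); last first.
    by move=> l _; rewrite /qa /w; ring.
  by rewrite [RHS]big_split sum_nat_eq -mulr_sumr /qa big_split.
have key : - (N * w i) <= M * N + delta * (N * \sum_l qa l).
  have e1 : N * w i = \sum_j w j * (\sum_d md d * A d j + delta * rho j).
    transitivity (\sum_j (w j * N) * (j == i)%:R).
      by rewrite (sum_nat_eq (fun j => w j * N)) mulrC.
    apply: eq_bigr => j _.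
    rewrite -mulrA; congr (_ * _); have := E2 j; lra.
  have e2 : \sum_j w j * (\sum_d md d * A d j + delta * rho j) =
      - \sum_d md d * pi d + delta * \sum_j w j * rho j.
    under eq_bigr do rewrite mulrDr.
    rewrite big_split; congr (_ + _); last first.
      by rewrite mulr_sumr; apply: eq_bigr => j _; rewrite mulrCA.
    under eq_bigr do rewrite mulr_sumr.
    rewrite exchange_big /= -sumrN; apply: eq_bigr => d _.
    have hp : pi d = - \sum_l w l * A d l by have := E1 d; lra.
    by rewrite hp mulrN opprK mulr_sumr; apply: eq_bigr => j _; ring.
  have b1 : \sum_d md d * pi d <= M * N.
    rewrite /N mulr_sumr; apply: ler_sum => d _.
    apply: le_trans (ler_norm _) _; rewrite normrM.
    by apply: ler_pM => //; apply: normr_ge0.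
  have b2 : - (\sum_j w j * rho j) <= N * \sum_l qa l.
    rewrite -sumrN mulr_sumr; apply: ler_sum => j _.
    apply: le_trans (ler_norm _) _; rewrite normrN normrM mulrC.
    by apply: ler_pM => //; apply: normr_ge0.
  have b2' := ler_wpM2l hdelta b2.
  rewrite e1 e2; lra.
have NE : N = 0.
  apply/eqP; rewrite eq_le N0 andbT leNgt; apply/negP => Npos.
  have : N * (delta * \sum_l qa l + w i + M) < 0 by rewrite pmulr_rlt0.
  lra.
have wE : w i = 0.
  have pi0 d : pi d = 0.
    apply/eqP; rewrite -normr_le0; apply: le_trans (piN d) _.
    rewrite -NE /N (bigD1 d) //= lerDl; apply: sumr_ge0 => *; exact: Nd0.
  pose wv := \col_l w l.
  have hAw : A *m wv = 0.
    apply/matrixP => d j; rewrite !mxE -[RHS](E1 d) pi0 addr0.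
    by apply: eq_bigr => l _; rewrite mxE mulrC.
  have /row_fullP [B hB] : row_full A by rewrite /row_full hrank.
  have : wv = 0 by rewrite -[wv]mul1mx -hB -mulmxA hAw mulmx0.
  by move/matrixP/(_ i 0); rewrite !mxE.
have : 0 <= delta * \sum_l qa l + M by apply: addr_ge0 => //; apply: mulr_ge0 => //; apply: sumr_ge0.
by rewrite wE addr0 in E3; rewrite leNgt E3.
Qed.


Lemma bigmax_cases (T : finType) (F : T -> R) :
  \big[Num.max/0]_i F i = 0 \/ exists i, \big[Num.max/0]_i F i = F i.
Proof.
apply: (big_ind (fun v => v = 0 \/ exists i, v = F i)); first by left.
  move=> u v hu hv; case: (leP u v) => _; [exact: hv|exact: hu].
by move=> i _; right; exists i.
Qed.

Lemma le_maxnorm (m n : nat) (M : 'M[R]_(m, n)) i j : `|M i j| <= mxmaxnorm M.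
Proof.
rewrite /mxmaxnorm; apply: le_trans (le_bigmax _ _ i).
exact: (le_bigmax _ (fun j => `|M i j|) j).
Qed.

Lemma maxnorm_ge0 (m n : nat) (M : 'M[R]_(m, n)) : 0 <= mxmaxnorm M.
Proof.
rewrite /mxmaxnorm; case: (bigmax_cases (fun i => \big[Num.max/0]_j `|M i j|)) => [->//|[i ->]].
by case: (bigmax_cases (fun j => `|M i j|)) => [->//|[j ->]].
Qed.

Lemma le_vinf (n : nat) (x : 'cV[R]_n) i : `|x i 0| <= vinf x.
Proof. exact: (le_bigmax _ (fun i => `|x i 0|) i). Qed.

Lemma vl1_ge0 (n : nat) (x : 'cV[R]_n) : 0 <= vl1 x.
Proof. by apply: sumr_ge0 => *. Qed.

Lemma mulmx_bound (m n : nat) (M : 'M[R]_(m, n)) (v : 'cV[R]_n) i c :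
  (forall l, `|M i l| <= c) -> `|(M *m v) i 0| <= c * vl1 v.
Proof.
move=> h; rewrite mxE /vl1 mulr_sumr; apply: le_trans (ler_norm_sum _ _ _) _.
apply: ler_sum => l _; rewrite normrM; apply: ler_wpM2r => //.
Qed.

Lemma weak_dual (B : 'M[R]_(k, D)) (x : 'cV[R]_k) :
  mxmaxnorm (B *m A - 1%:M) <= delta -> vl1 (A *m x) <= 1 ->
  vinf x - delta * vl1 x <= mxmaxnorm B.
Proof.
move=> hB hx.
have hd : 0 <= delta * vl1 x by apply: mulr_ge0 => //; apply: vl1_ge0.
case: (bigmax_cases (fun i => `|x i 0|)) => [|[i]]; rewrite -/(vinf x) => ->.
  by apply: le_trans (maxnorm_ge0 B); rewrite subr_le0.
have e : x = B *m (A *m x) - (B *m A - 1%:M) *m x.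
  by rewrite mulmxBl mul1mx mulmxA opprB addrC subrK.
have hxi : x i 0 = (B *m (A *m x)) i 0 - ((B *m A - 1%:M) *m x) i 0.
  by rewrite {1}e !mxE.
have h1 := mulmx_bound (A *m x) (le_maxnorm B i).
have h2 : `|((B *m A - 1%:M) *m x) i 0| <= delta * vl1 x.
  apply: mulmx_bound => l; exact: le_trans (le_maxnorm _ i l) hB.
have h3 : mxmaxnorm B * vl1 (A *m x) <= mxmaxnorm B.
  by rewrite -{2}[mxmaxnorm B]mulr1; apply: ler_wpM2l => //; apply: maxnorm_ge0.
have := ler_normB ((B *m (A *m x)) i 0) (((B *m A - 1%:M) *m x) i 0).
rewrite -hxi => h4; lra.
Qed.

Lemma dsum_bound (m n : nat) (M N : 'M[R]_(m, n)) c :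
  (forall i j, `|M i j| <= c) -> `|\sum_i \sum_j M i j * N i j| <= c * mxl1 N.
Proof.
move=> h; rewrite /mxl1 mulr_sumr; apply: le_trans (ler_norm_sum _ _ _) _.
apply: ler_sum => i _; rewrite mulr_sumr; apply: le_trans (ler_norm_sum _ _ _) _.
apply: ler_sum => j _; rewrite normrM; apply: ler_wpM2r => //.
Qed.

Lemma weak_trace (B : 'M[R]_(k, D)) (Q : 'M[R]_k) :
  mxmaxnorm (B *m A - 1%:M) <= delta -> mxl1 (Q *m A^T) <= 1 ->
  \tr Q - delta * mxl1 Q <= mxmaxnorm B.
Proof.
move=> hB hQ.
have e1 : \sum_i \sum_d B i d * (Q *m A^T) i d = \sum_i \sum_l (B *m A) i l * Q i l.
  apply: eq_bigr => i _.
  under eq_bigr => d _ do rewrite mxE mulr_sumr.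
  rewrite exchange_big; apply: eq_bigr => l _ /=; rewrite mxE mulr_suml.
  by apply: eq_bigr => d _; rewrite mxE; ring.
have e2 : \sum_i \sum_l (B *m A - 1%:M) i l * Q i l =
    \sum_i \sum_l (B *m A) i l * Q i l - \tr Q.
  rewrite /mxtrace -sumrB; apply: eq_bigr => i _.
  rewrite -(sum_nat_eq (fun l => Q i l) i) -sumrB; apply: eq_bigr => l _.
  have -> : (B *m A - 1%:M) i l = (B *m A) i l - (l == i)%:R by rewrite !mxE eq_sym.
  by rewrite mulrBl [_%:R * _]mulrC.
have h1 := dsum_bound (Q *m A^T) (le_maxnorm B).
have h2 : `|\sum_i \sum_l (B *m A - 1%:M) i l * Q i l| <= delta * mxl1 Q.
  by apply: dsum_bound => i l; apply: le_trans (le_maxnorm _ i l) hB.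
have h3 : mxmaxnorm B * mxl1 (Q *m A^T) <= mxmaxnorm B.
  by rewrite -{2}[mxmaxnorm B]mulr1; apply: ler_wpM2l => //; apply: maxnorm_ge0.
rewrite e1 in h1.
have h4 := ler_norm (\sum_i \sum_l (B *m A) i l * Q i l).
have h5 := ler_norm (- \sum_i \sum_l (B *m A - 1%:M) i l * Q i l).
rewrite normrN e2 in h5.
rewrite e2 in h2.
lra.
Qed.

Lemma vl1_0 (n : nat) : vl1 (0 : 'cV[R]_n) = 0.
Proof. by rewrite /vl1 big1 // => i _; rewrite mxE normr0. Qed.

Lemma vinf_0 (n : nat) : vinf (0 : 'cV[R]_n) = 0.
Proof.
rewrite /vinf; case: (bigmax_cases (fun i => `|(0 : 'cV[R]_n) i 0|)) => [->//|[i ->]].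
by rewrite mxE normr0.
Qed.

Lemma mxl1_0 (m n : nat) : mxl1 (0 : 'M[R]_(m, n)) = 0.
Proof. by rewrite /mxl1 big1 // => i _; rewrite big1 // => j _; rewrite mxE normr0. Qed.

Lemma sum_single (T : finType) (i0 : T) (G : T -> R) :
  (forall a, a != i0 -> G a = 0) -> \sum_a G a = G i0.
Proof. by move=> h; rewrite (bigD1 i0) //= big1 ?addr0. Qed.

Lemma main_sec : exists lam : R,
    is_inf (lambda_values delta A) lam /\
    is_max (dual_values delta A) lam /\
    is_sup (trace_values delta A) lam.
Proof.
have H' : forall i : 'I_k, exists p : ('I_D -> R) * 'cV[R]_k,
   (forall l, `|\sum_d p.1 d * A d l - (l == i)%:R| <= delta) /\
   vl1 (A *m p.2) <= 1 /\ (forall d, `|p.1 d| <= p.2 i 0 - delta * vl1 p.2).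
  by move=> i; have [b [x h]] := row_exists i; exists (b, x).
have [f hf] := fin_all_exists H'.
pose B := \matrix_(i, d) (f i).1 d.
have hB : mxmaxnorm (B *m A - 1%:M) <= delta.
  rewrite /mxmaxnorm; apply: bigmax_le => // i _; apply: bigmax_le => // l _.
  have [h _] := hf i.
  suff -> : (B *m A - 1%:M) i l = \sum_d (f i).1 d * A d l - (l == i)%:R by [].
  rewrite !mxE eq_sym; congr (_ - _); apply: eq_bigr => d _; by rewrite mxE.
have zero_case : mxmaxnorm B = 0 -> exists xs : 'cV_k,
    vl1 (A *m xs) <= 1 /\ mxmaxnorm B <= vinf xs - delta * vl1 xs.
  by move=> h0; exists 0; rewrite mulmx0 !vl1_0 vinf_0 h0 mulr0 subr0 ler01.
have [xs [hxs1 hxs2]] : exists xs : 'cV_k,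
    vl1 (A *m xs) <= 1 /\ mxmaxnorm B <= vinf xs - delta * vl1 xs.
  case: (bigmax_cases (fun i => \big[Num.max/0]_d `|B i d|)) => [h0|[i hi]].
    exact: zero_case.
  case: (bigmax_cases (fun d => `|B i d|)) => [h0|[d hd]].
    by apply: zero_case; rewrite /mxmaxnorm hi.
  have [_ [h2 h3]] := hf i.
  exists (f i).2; split => //.
  rewrite /mxmaxnorm hi hd mxE; apply: le_trans (h3 d) _.
  rewrite lerD2r; apply: le_trans (ler_norm _) (le_vinf _ _).
exists (vinf xs - delta * vl1 xs).
split; [|split]; split.
- by move=> y [B' [hB' ->]]; apply: weak_dual.
- by move=> w hw; apply: le_trans (hw _ _) hxs2; exists B.
- by exists xs.
- by move=> y [x [hx ->]]; apply: le_trans (weak_dual hB hx) hxs2.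
- by move=> y [Q [hQ ->]]; apply: le_trans (weak_trace hB hQ) hxs2.
move=> w hw.
case: (bigmax_cases (fun i => `|xs i 0|)) => [h0|[i0 hi0]].
  rewrite -/(vinf xs) in h0.
  apply: le_trans (hw 0 _).
    rewrite h0 sub0r oppr_le0; apply: mulr_ge0 => //; exact: vl1_ge0.
  by exists 0; rewrite mul0mx !mxl1_0 mxtrace0 mulr0 subr0; split => //; exact: ler01.
rewrite -/(vinf xs) in hi0.
pose s := sg (0 <= xs i0 0).
pose Q := \matrix_(a, b) (if a == i0 then s * xs b 0 else 0).
apply: hw; exists Q; split.
  rewrite /mxl1 (sum_single (i0 := i0)); last first.
    move=> a ha; apply: big1 => d _; rewrite mxE big1 ?normr0 // => b _.
    by rewrite mxE (negbTE ha) mul0r.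
  apply: le_trans hxs1; rewrite le_eqVlt; apply/orP; left; apply/eqP; rewrite /vl1.
  apply: eq_bigr => d _; rewrite !mxE.
  rewrite (eq_bigr (fun b => s * (A d b * xs b 0))); last first.
    by move=> b _; rewrite !mxE eqxx; ring.
  by rewrite -mulr_sumr normrM sg_norm mul1r.
rewrite hi0; congr (_ - _ * _).
  rewrite /mxtrace (sum_single (i0 := i0)); last by move=> a ha; rewrite mxE (negbTE ha).
  by rewrite mxE eqxx /s sg_abs.
rewrite /mxl1 (sum_single (i0 := i0)); last first.
  by move=> a ha; apply: big1 => b _; rewrite mxE (negbTE ha) normr0.
by rewrite /vl1; apply: eq_bigr => b _; rewrite mxE eqxx normrM sg_norm mul1r.
Qed.

End Main.

Unset Implicit Arguments.

Theorem mainTheorem2 (R : realFieldType) (D k : nat) (A : 'M[R]_(D, k)) (delta : R)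
  (hA : forall i j, 0 <= A i j) (hrank : \rank A = k) (hdelta : 0 <= delta) :
  exists lam : R,
    is_inf (lambda_values delta A) lam /\
    is_max (dual_values delta A) lam /\
    is_sup (trace_values delta A) lam.
Proof.
exact: (main_sec hrank hdelta).
Qed.
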